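(* Let $n\ge1$ and $M\le N$ be integers. For each chain (totally ordered subset) $C$ of pure diagrams lying in $B_{M,N}$, let $\sigma_C=\{\sum_{\pi\in C}\lambda_\pi\pi:\lambda_\pi\ge0\}\subseteq B_{M,N}$. The cones $\sigma_C$ form a simplicial fan; in particular, any element of $B_{M,N}$ that can be written as a linear combination with strictly positive coefficients of the elements of some chain of pure diagrams in $B_{M,N}$ can be written so in exactly one way (the chain and the coefficients are uniquely determined).
   Context: $B_{M,N}$ is the $\mathbb Q$-vector space of arrays $\beta=(\beta_{i,j})$ indexed by $0\le i\le n$, $j\in\mathbb Z$, with $\beta_{i,j}=0$ unless $M+i\le j\le N+i$. For integers $d_0<d_1<\dots<d_t$ with $0\le t\le n$, the pure diagram $\pi(d_0,\dots,d_t)$ is the array whose entry in position $(i,d_i)$ is $(-1)^i\prod_{0\le j\le t,\,j\ne i}\frac{1}{d_j-d_i}$ for $i=0,\dots,t$, and whose other entries are $0$; its codimension is $t$. It lies in $B_{M,N}$ iff $M+i\le d_i\le N+i$ for all $i$. Partial order: $\pi(d_0,\dots,d_t)\le\pi(d'_0,\dots,d'_u)$ iff $t\ge u$ and $d_i\le d'_i$ for $i=0,\dots,u$. *)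

(* Defs.v *)
From mathcomp Require Import all_boot all_order all_algebra.
Set Implicit Arguments. Unset Strict Implicit. Unset Printing Implicit Defensive.
Import Order.TTheory GRing.Theory Num.Theory.
Local Open Scope ring_scope.

Definition diagram := nat -> int -> rat.

(* A degree sequence d = [:: d_0; ...; d_t] (t = size d - 1). *)
Definition degseq := seq int.

Definition pure (d : degseq) : diagram := fun i j =>
  if (i < size d)%N && (j == nth 0 d i) then
    (-1) ^+ i * \prod_(k < size d | k != i :> nat)
                   ((nth 0 d k - nth 0 d i)%:~R : rat)^-1
  else 0.

Definition pure_inB (n : nat) (M N : int) (d : degseq) : bool :=
  [&& (0 < size d)%N, (size d <= n.+1)%N, sorted (fun a b : int => a < b) d &
      all (fun i => (M + i%:Z <= nth 0 d i) && (nth 0 d i <= N + i%:Z))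
          (iota 0 (size d))].

Definition pure_le (d d' : degseq) : bool :=
  (size d' <= size d)%N &&
  all (fun i => nth 0 d i <= nth 0 d' i) (iota 0 (size d')).

Definition is_chain (n : nat) (M N : int) (C : seq degseq) : Prop :=
  [/\ uniq C, all (pure_inB n M N) C &
      forall d d', d \in C -> d' \in C -> pure_le d d' || pure_le d' d].

Definition lincomb (C : seq degseq) (lam : degseq -> rat) : diagram :=
  fun i j => \sum_(d <- C) lam d * pure d i j.

Definition in_cone (C : seq degseq) (beta : diagram) : Prop :=
  exists lam : degseq -> rat,
    (forall d, d \in C -> 0 <= lam d) /\
    (forall i j, beta i j = lincomb C lam i j).

(* Main.v *)
Require Import Defs.
From mathcomp Require Import all_boot all_order all_algebra.
From mathcomp Require Import ring lra zify.
Import Order.TTheory GRing.Theory Num.Theory.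
Set Implicit Arguments. Unset Strict Implicit. Unset Printing Implicit Defensive.
Local Open Scope ring_scope.

Definition srt (d : degseq) := sorted (fun a b : int => a < b) d.

Lemma srt_nth d a b : srt d -> (a < size d)%N -> (b < size d)%N -> (a < b)%N ->
  nth 0 d a < nth 0 d b.
Proof.
move=> Hs Ha Hb Hab.
exact: (sorted_ltn_nth (@lt_trans _ int) 0 Hs).
Qed.

Lemma sign_prod_gt0 (G : nat -> rat) i :
  (forall k, (k < i)%N -> G k < 0) -> 0 < (-1)^+i * \prod_(k < i) G k.
Proof.
elim: i => [|i IH] H; first by rewrite expr0 big_ord0 mulr1.
rewrite big_ord_recr /=.
have -> : (-1)^+i.+1 * (\prod_(k < i) G k * G i) =
   ((-1)^+i * \prod_(k < i) G k) * (- G i) by rewrite exprSr; ring.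
apply: mulr_gt0; first by apply: IH => k Hk; apply: H; apply: ltnW.
by rewrite oppr_gt0; apply: H.
Qed.

Lemma pure_gt0 d i : srt d -> (i < size d)%N -> 0 < pure d i (nth 0 d i).
Proof.
move=> Hs Hi; rewrite /pure Hi eqxx /=.
rewrite (bigID (fun k : 'I_(size d) => (k < i)%N)) /= mulrA.
apply: mulr_gt0.
  rewrite (eq_bigl (fun k : 'I_(size d) => (k < i)%N)); last first.
    by move=> k /=; case: (ltngtP k i).
  rewrite -(big_ord_widen_cond (size d) (fun _ => true)
     (fun k => ((nth 0 d k - nth 0 d i)%:~R : rat)^-1)) ?(ltnW Hi) //.
  apply: (@sign_prod_gt0 (fun k => ((nth 0 d k - nth 0 d i)%:~R : rat)^-1)) => k Hk.
  rewrite invr_lt0 ltrz0 subr_lt0; apply: srt_nth => //; exact: ltn_trans Hk Hi.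
apply: prodr_gt0 => k /andP[Hne Hge].
have Hik : (i < k)%N by move: Hne Hge; case: (ltngtP k i).
rewrite invr_gt0 ltr0z subr_gt0; exact: srt_nth.
Qed.

Lemma pure_eq d i j : pure d i j =
  if (i < size d)%N && (j == nth 0 d i) then pure d i (nth 0 d i) else 0.
Proof. rewrite /pure; case Hi: (i < size d)%N => //=; case: eqP => // _; by rewrite eqxx. Qed.

Lemma pure_ge0 d i j : srt d -> 0 <= pure d i j.
Proof.
move=> Hs; rewrite pure_eq; case: ifP => // /andP[Hi _].
by rewrite le_eqVlt pure_gt0 ?orbT.
Qed.

Lemma inB_srt n M N d : pure_inB n M N d -> srt d /\ (0 < size d)%N.
Proof. by case/and4P. Qed.

Lemma pure_le_refl d : pure_le d d.
Proof. by rewrite /pure_le leqnn /=; apply/allP => i _. Qed.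

Lemma pure_le_nth d d' i : pure_le d d' -> (i < size d')%N -> nth 0 d i <= nth 0 d' i.
Proof. by case/andP=> _ /allP H Hi; apply: H; rewrite mem_iota. Qed.

Lemma pure_le_trans d1 d2 d3 : pure_le d1 d2 -> pure_le d2 d3 -> pure_le d1 d3.
Proof.
move=> H12 H23; move: (H12) (H23) => /andP[s12 _] /andP[s23 _].
rewrite /pure_le (leq_trans s23 s12) /=; apply/allP => i; rewrite mem_iota add0n => /andP[_ Hi].
exact: le_trans (pure_le_nth H12 (leq_trans Hi s23)) (pure_le_nth H23 Hi).
Qed.

Lemma pure_le_anti d d' : pure_le d d' -> pure_le d' d -> d = d'.
Proof.
move=> H1 H2; move: (H1) (H2) => /andP[s1 _] /andP[s2 _].
have Hs : size d = size d' by apply/eqP; rewrite eqn_leq s1 s2.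
apply: (eq_from_nth (x0 := 0)) => // i Hi.
by apply: le_anti; rewrite pure_le_nth // ?pure_le_nth // -?Hs.
Qed.

Definition total (C : seq degseq) :=
  forall d d', d \in C -> d' \in C -> pure_le d d' || pure_le d' d.

Lemma chain_min (C : seq degseq) : C != [::] -> total C ->
  exists2 m, m \in C & forall d, d \in C -> pure_le m d.
Proof.
elim: C => [//|x s IH] _ Ht.
case: (eqVneq s [::]) => [->|Hs].
  by exists x; rewrite ?mem_head // => d; rewrite inE => /eqP ->; apply: pure_le_refl.
have Ht' : total s by move=> d d' Hd Hd'; apply: Ht; rewrite inE ?Hd ?Hd' orbT.
case: (IH Hs Ht') => m Hm Hmin.
have Hm' : m \in x :: s by rewrite inE Hm orbT.
case/orP: (Ht x m (mem_head _ _) Hm') => Hxm.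
  exists x; first exact: mem_head.
  move=> d; rewrite inE => /orP[/eqP ->|Hd]; first exact: pure_le_refl.
  exact: pure_le_trans Hxm (Hmin _ Hd).
exists m; first by rewrite inE Hm orbT.
by move=> d; rewrite inE => /orP[/eqP ->|Hd] //; apply: Hmin.
Qed.

Lemma pure_lt_ex m m2 : pure_le m m2 -> m != m2 ->
  exists2 i, (i < size m)%N & (size m2 <= i)%N || (nth 0 m i < nth 0 m2 i).
Proof.
move=> Hle Hne; move: (Hle) => /andP[Hs _].
case: (ltngtP (size m2) (size m)) => H.
- by exists (size m2); rewrite ?leqnn.
- by move: Hs; rewrite leqNgt H.
case: (boolP (has (fun i => nth 0 m i < nth 0 m2 i) (iota 0 (size m)))).
  by case/hasP => i; rewrite mem_iota add0n => /andP[_ Hi] Hlt; exists i; rewrite ?Hlt ?orbT.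
move/hasPn => Hn; exfalso; move/eqP: Hne; apply.
apply: (eq_from_nth (x0 := 0)) => // i Hi.
have := Hn i; rewrite mem_iota add0n Hi => /(_ isT) Hnlt.
have := pure_le_nth Hle (i:=i); rewrite H => /(_ Hi).
by rewrite le_eqVlt (negbTE Hnlt) orbF => /eqP.
Qed.

Lemma private m (C : seq degseq) : m \in C -> (forall d, d \in C -> pure_le m d) ->
  total C -> (0 < size m)%N ->
  exists2 i, (i < size m)%N & forall d, d \in C -> d != m ->
     ~~ ((i < size d)%N && (nth 0 m i == nth 0 d i)).
Proof.
move=> Hm Hmin Ht Hsz.
set C1 := [seq d <- C | d != m].
case: (eqVneq C1 [::]) => [E|Hne].
  exists 0%N => // d Hd Hdm; exfalso.
  have : d \in C1 by rewrite mem_filter Hdm.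
  by rewrite E.
have Ht1 : total C1 by move=> d d'; rewrite !mem_filter => /andP[_ ?] /andP[_ ?]; apply: Ht.
case: (chain_min Hne Ht1) => m2; rewrite mem_filter => /andP[Hm2m Hm2] Hmin2.
have Hmm2 : m != m2 by rewrite eq_sym.
have [i Hi Hor] := pure_lt_ex (Hmin _ Hm2) Hmm2.
exists i => // d Hd Hdm; apply/negP => /andP[Hid /eqP Heq].
have Hd1 : d \in C1 by rewrite mem_filter Hdm Hd.
have Hle2 := Hmin2 d Hd1.
move: (Hle2) => /andP[Hs2 _].
have Hi2 : (i < size m2)%N by exact: leq_trans Hid Hs2.
move: Hor; rewrite leqNgt Hi2 /= => Hlt.
have := pure_le_nth Hle2 Hid.
by rewrite -Heq leNgt Hlt.
Qed.

Lemma lincomb_rem C lam m i j : uniq C -> m \in C ->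
  lincomb C lam i j = lam m * pure m i j + lincomb (rem m C) lam i j.
Proof. by move=> Hu Hm; rewrite /lincomb (perm_big _ (perm_to_rem Hm)) big_cons. Qed.

Lemma lincomb_priv C lam m i : uniq C ->
  (forall d, d \in C -> d != m -> ~~ ((i < size d)%N && (nth 0 m i == nth 0 d i))) ->
  lincomb (rem m C) lam i (nth 0 m i) = 0.
Proof.
move=> Hu H; rewrite /lincomb big1_seq // => d /andP[_].
rewrite (mem_rem_uniq _ Hu) inE => /andP[Hdm Hd].
by rewrite pure_eq (negbTE (H d Hd Hdm)) mulr0.
Qed.

Lemma lincomb_ge0 C lam i j : (forall d, d \in C -> srt d) ->
  (forall d, d \in C -> 0 <= lam d) -> 0 <= lincomb C lam i j.
Proof.
move=> Hs Hl; rewrite /lincomb big_seq; apply: sumr_ge0 => d Hd.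
by apply: mulr_ge0; [apply: Hl | apply: pure_ge0; apply: Hs].
Qed.

Lemma lincomb_supp C lam i j : lincomb C lam i j != 0 ->
  exists2 d, d \in C & (i < size d)%N && (j == nth 0 d i).
Proof.
case: (boolP (has (fun d => (i < size d)%N && (j == nth 0 d i)) C)).
  by case/hasP => d Hd H _; exists d.
move/hasPn => Hn; rewrite /lincomb big1_seq ?eqxx // => d /andP[_ Hd].
by rewrite pure_eq (negbTE (Hn d Hd)) mulr0.
Qed.

Lemma chain_props n M N C : is_chain n M N C ->
  [/\ uniq C, forall d, d \in C -> srt d /\ (0 < size d)%N & total C].
Proof.
case=> Hu /allP Ha Ht; split => // d Hd; exact: inB_srt (Ha d Hd).
Qed.

Lemma chain_sub n M N C C' : is_chain n M N C -> uniq C' -> {subset C' <= C} ->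
  is_chain n M N C'.
Proof.
case=> Hu /allP Ha Ht Hu' Hsub; split => //.
  by apply/allP => d Hd; apply: Ha; apply: Hsub.
by move=> d d' Hd Hd'; apply: Ht; apply: Hsub.
Qed.

Lemma part1 n M N k C lam : (size C <= k)%N -> is_chain n M N C ->
  (forall i j, lincomb C lam i j = 0) -> forall d, d \in C -> lam d = 0.
Proof.
elim: k C => [|k IH] C Hk Hc H0.
  by case: C Hk Hc H0.
case: (eqVneq C [::]) => [-> //|Hne].
case: (chain_props Hc) => Hu Hsd Ht.
have [m Hm Hmin] := chain_min Hne Ht.
have [Hsm Hszm] := Hsd m Hm.
have [i Hi Hpriv] := private Hm Hmin Ht Hszm.
have Hlm : lam m = 0.
  have := H0 i (nth 0 m i).
  rewrite (lincomb_rem _ _ _ Hu Hm) (lincomb_priv _ Hu Hpriv) addr0.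
  by move/eqP; rewrite mulf_eq0 (gt_eqF (pure_gt0 Hsm Hi)) orbF => /eqP.
have Hc' : is_chain n M N (rem m C).
  by apply: (chain_sub Hc (rem_uniq _ Hu)) => x; apply: mem_rem.
have Hk' : (size (rem m C) <= k)%N by rewrite size_rem //; move: Hk; case: (size C).
have H0' : forall i j, lincomb (rem m C) lam i j = 0.
  by move=> i' j'; have := H0 i' j'; rewrite (lincomb_rem _ _ _ Hu Hm) Hlm mul0r add0r.
move=> d Hd; case: (eqVneq d m) => [->//|Hdm].
by apply: (IH _ Hk' Hc' H0'); rewrite (mem_rem_uniq _ Hu) inE Hdm Hd.
Qed.

Lemma lincomb_gt0 C lam d i : uniq C -> (forall d, d \in C -> srt d) ->
  (forall d, d \in C -> 0 <= lam d) -> d \in C -> 0 < lam d -> (i < size d)%N ->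
  0 < lincomb C lam i (nth 0 d i).
Proof.
move=> Hu Hs Hl Hd Hld Hi.
rewrite (lincomb_rem _ _ _ Hu Hd).
have h1 := mulr_gt0 Hld (pure_gt0 (Hs d Hd) Hi).
have h2 : 0 <= lincomb (rem d C) lam i (nth 0 d i).
  by apply: lincomb_ge0 => x Hx; [apply: Hs | apply: Hl]; exact: mem_rem Hx.
lra.
Qed.

Definition good C (lam : degseq -> rat) :=
  [/\ uniq C, forall d, d \in C -> srt d /\ (0 < size d)%N, total C &
      forall d, d \in C -> 0 < lam d].

Lemma good_gt0 C lam d i : good C lam -> d \in C -> (i < size d)%N ->
  0 < lincomb C lam i (nth 0 d i).
Proof.
case=> Hu Hs _ Hp Hd Hi; apply: lincomb_gt0 => //.
- by move=> x Hx; case: (Hs x Hx).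
- by move=> x Hx; apply: ltW; apply: Hp.
- exact: Hp.
Qed.

Lemma empty_side C lam : good C lam -> (forall i j, 0 = lincomb C lam i j) -> C = [::].
Proof.
case: C => // d s Hg H.
have [_ Hs _ _] := Hg.
have [_ Hsz] := Hs d (mem_head _ _).
have := good_gt0 (i := 0%N) Hg (mem_head _ _) Hsz.
by rewrite -H ltxx.
Qed.

Lemma min_dir C C' lam lam' m m' : good C lam -> good C' lam' ->
  (forall i j, lincomb C lam i j = lincomb C' lam' i j) ->
  m \in C -> (forall d, d \in C -> pure_le m d) ->
  m' \in C' -> (forall d, d \in C' -> pure_le m' d) ->
  (size m' <= size m)%N /\ (forall i, (i < size m)%N -> nth 0 m' i <= nth 0 m i).
Proof.
move=> Hg Hg' E Hm Hmin Hm' Hmin'.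
have [Hu Hs Ht Hp] := Hg; have [Hu' Hs' Ht' Hp'] := Hg'.
split.
  rewrite leqNgt; apply/negP => Hlt.
  have [Hsm' Hszm'] := Hs' m' Hm'.
  have Ht1 : ((size m').-1 < size m')%N by case: (size m') Hszm'.
  have Hpos := good_gt0 Hg' Hm' Ht1.
  rewrite -E in Hpos.
  have [d Hd /andP[Htd _]] := lincomb_supp (negbT (gt_eqF Hpos)).
  have /andP[Hsd _] := Hmin d Hd.
  move: Htd Hsd Hlt Hszm'; case: (size m') => // s /=.
  by move=> a b c _; have := leq_trans a b; rewrite ltnNge => /negP; apply; rewrite -ltnS.
move=> i Hi.
have Hpos := good_gt0 Hg Hm Hi.
rewrite E in Hpos.
have [d' Hd' /andP[Hid' /eqP Heq]] := lincomb_supp (negbT (gt_eqF Hpos)).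
rewrite Heq; exact: pure_le_nth (Hmin' d' Hd') Hid'.
Qed.

Lemma lam_dir C C' lam lam' m : good C lam -> good C' lam' ->
  (forall i j, lincomb C lam i j = lincomb C' lam' i j) ->
  m \in C -> (forall d, d \in C -> pure_le m d) -> m \in C' -> lam' m <= lam m.
Proof.
move=> Hg Hg' E Hm Hmin Hm'.
have [Hu Hs Ht Hp] := Hg; have [Hu' Hs' Ht' Hp'] := Hg'.
have [Hsm Hszm] := Hs m Hm.
have [i Hi Hpriv] := private Hm Hmin Ht Hszm.
have E1 := E i (nth 0 m i).
rewrite (lincomb_rem _ _ _ Hu Hm) (lincomb_priv _ Hu Hpriv) addr0 in E1.
rewrite (lincomb_rem _ _ _ Hu' Hm') in E1.
have h2 : 0 <= lincomb (rem m C') lam' i (nth 0 m i).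
  apply: lincomb_ge0 => x Hx; have Hx' := mem_rem Hx.
  - by case: (Hs' x Hx').
  - by apply: ltW; apply: Hp'.
have hp := pure_gt0 Hsm Hi.
by rewrite -(ler_pM2r hp) E1 lerDl.
Qed.

Lemma good_rem C lam m : good C lam -> good (rem m C) lam.
Proof.
case=> Hu Hs Ht Hp; split.
- exact: rem_uniq.
- by move=> d Hd; apply: Hs; exact: mem_rem Hd.
- by move=> d d' Hd Hd'; apply: Ht; [exact: mem_rem Hd | exact: mem_rem Hd'].
- by move=> d Hd; apply: Hp; exact: mem_rem Hd.
Qed.

Lemma part3 k : forall C C' lam lam', (size C <= k)%N -> good C lam -> good C' lam' ->
  (forall i j, lincomb C lam i j = lincomb C' lam' i j) ->
  C =i C' /\ (forall d, d \in C -> lam d = lam' d).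
Proof.
elim: k => [|k IH] C C' lam lam' Hk Hg Hg' E.
  move: Hk; rewrite leqn0 size_eq0 => /eqP EC.
  have EC' : C' = [::] by apply: (empty_side Hg') => i j; rewrite -E EC /lincomb big_nil.
  by rewrite EC EC'.
case: (eqVneq C [::]) => [EC|HneC].
  have EC' : C' = [::] by apply: (empty_side Hg') => i j; rewrite -E EC /lincomb big_nil.
  by rewrite EC EC'.
case: (eqVneq C' [::]) => [EC'|HneC'].
  have EC : C = [::] by apply: (empty_side Hg) => i j; rewrite E EC' /lincomb big_nil.
  by move/eqP: HneC; rewrite EC.
have [Hu Hs Ht Hp] := Hg; have [Hu' Hs' Ht' Hp'] := Hg'.
have [m Hm Hmin] := chain_min HneC Ht.
have [m' Hm' Hmin'] := chain_min HneC' Ht'.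
have [s1 n1] := min_dir Hg Hg' E Hm Hmin Hm' Hmin'.
have E' : forall i j, lincomb C' lam' i j = lincomb C lam i j by move=> i j; rewrite E.
have [s2 n2] := min_dir Hg' Hg E' Hm' Hmin' Hm Hmin.
have Emm : m' = m.
  have Hsz : size m' = size m by apply/eqP; rewrite eqn_leq s1 s2.
  apply: (eq_from_nth (x0 := 0)) => // i Hi.
  by apply: le_anti; rewrite n1 -?Hsz // n2.
subst m'.
have Hlam : lam m = lam' m.
  by apply: le_anti; rewrite (lam_dir Hg Hg' E) // (lam_dir Hg' Hg E').
have Erem : forall i j, lincomb (rem m C) lam i j = lincomb (rem m C') lam' i j.
  move=> i j; have := E i j.
  by rewrite (lincomb_rem _ _ _ Hu Hm) (lincomb_rem _ _ _ Hu' Hm') Hlam => /addrI.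
have Hk' : (size (rem m C) <= k)%N by rewrite size_rem //; move: Hk; case: (size C).
have [H1 H2] := IH _ _ _ _ Hk' (good_rem m Hg) (good_rem m Hg') Erem.
split.
  move=> x; case: (eqVneq x m) => [->|Hxm]; first by rewrite Hm Hm'.
  by have := H1 x; rewrite (mem_rem_uniq _ Hu) (mem_rem_uniq _ Hu') !inE Hxm.
move=> d Hd; case: (eqVneq d m) => [->//|Hdm].
by apply: H2; rewrite (mem_rem_uniq _ Hu) inE Hdm Hd.
Qed.

Lemma good_of_chain n M N C lam : is_chain n M N C ->
  (forall d, d \in C -> 0 < lam d) -> good C lam.
Proof. by move=> Hc Hp; case: (chain_props Hc). Qed.

Lemma supp_rep n M N C lam : is_chain n M N C -> (forall d, d \in C -> 0 <= lam d) ->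
  good [seq d <- C | lam d != 0] lam /\
  forall i j, lincomb C lam i j = lincomb [seq d <- C | lam d != 0] lam i j.
Proof.
move=> Hc Hl; split.
  apply: (good_of_chain (n:=n) (M:=M) (N:=N)).
    apply: (chain_sub Hc); first by apply: filter_uniq; case: Hc.
    by move=> x; rewrite mem_filter => /andP[].
  move=> d; rewrite mem_filter => /andP[Hne Hd].
  by rewrite lt_def Hne Hl.
move=> i j; rewrite /lincomb big_filter [RHS]big_mkcond; apply: eq_bigr => d _.
by case: ifP => // /negbFE/eqP ->; rewrite mul0r.
Qed.

Lemma part2 n M N C C' beta : is_chain n M N C -> is_chain n M N C' ->
  (in_cone C beta /\ in_cone C' beta) <-> in_cone [seq d <- C | d \in C'] beta.
Proof.
move=> Hc Hc'; split.
  case=> [[lam [Hl Eb]] [lam' [Hl' Eb']]].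
  have [HgS ES] := supp_rep Hc Hl.
  have [HgS' ES'] := supp_rep Hc' Hl'.
  have E : forall i j, lincomb [seq d <- C | lam d != 0] lam i j =
                       lincomb [seq d <- C' | lam' d != 0] lam' i j.
    by move=> i j; rewrite -ES -ES' -Eb -Eb'.
  have [HS _] := part3 (leqnn _) HgS HgS' E.
  exists lam; split.
    by move=> d; rewrite mem_filter => /andP[_ Hd]; apply: Hl.
  move=> i j; rewrite Eb /lincomb big_filter [RHS]big_mkcond; apply: eq_big_seq => d Hd /=.
  case: ifP => // HdC'.
  case: (eqVneq (lam d) 0) => [->|Hne]; first by rewrite mul0r.
  have : d \in [seq d <- C | lam d != 0] by rewrite mem_filter Hne Hd.
  by rewrite HS mem_filter HdC' andbF.
case=> lam [Hl Eb]; split.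
  exists (fun d => if d \in C' then lam d else 0); split.
    move=> d Hd; case: ifP => // HdC'; apply: Hl.
    by rewrite mem_filter HdC' Hd.
  move=> i j; rewrite Eb /lincomb big_filter [LHS]big_mkcond; apply: eq_bigr => d _.
  by case: ifP; rewrite ?mul0r.
exists (fun d => if d \in C then lam d else 0); split.
  move=> d Hd; case: ifP => // HdC; apply: Hl.
  by rewrite mem_filter HdC Hd.
have Hperm : perm_eq [seq d <- C | d \in C'] [seq d <- C' | d \in C].
  apply: uniq_perm.
  - by apply: filter_uniq; case: Hc.
  - by apply: filter_uniq; case: Hc'.
  by move=> x; rewrite !mem_filter andbC.
move=> i j; rewrite Eb /lincomb (perm_big _ Hperm) big_filter [LHS]big_mkcond.
apply: eq_bigr => d _.
by case: ifP; rewrite ?mul0r.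
Qed.

Theorem proposition3p1 (n : nat) (M N : int) :
  (1 <= n)%N -> M <= N ->
  (* each cone sigma_C is simplicial: the elements of C are linearly independent *)
  (forall C, is_chain n M N C ->
     forall lam : degseq -> rat,
       (forall i j, lincomb C lam i j = 0) -> forall d, d \in C -> lam d = 0) /\
  (* any two cones meet in a common face: sigma_C /\ sigma_C' = sigma_{C cap C'} *)
  (forall C C', is_chain n M N C -> is_chain n M N C' ->
     forall beta : diagram,
       (in_cone C beta /\ in_cone C' beta) <->
       in_cone [seq d <- C | d \in C'] beta) /\
  (* uniqueness of strictly positive representations *)
  (forall C C' (lam lam' : degseq -> rat),
     is_chain n M N C -> is_chain n M N C' ->
     (forall d, d \in C -> 0 < lam d) -> (forall d, d \in C' -> 0 < lam' d) ->
     (forall i j, lincomb C lam i j = lincomb C' lam' i j) ->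
     C =i C' /\ (forall d, d \in C -> lam d = lam' d)).
Proof.
move=> _ _; split; [|split].
- move=> C Hc lam H0. exact: (part1 (leqnn (size C)) Hc H0).
- move=> C C' Hc Hc' beta; exact: (part2 _ Hc Hc').
move=> C C' lam lam' Hc Hc' Hp Hp' E.
exact: part3 (leqnn _) (good_of_chain Hc Hp) (good_of_chain Hc' Hp') E.
Qed.
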